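(* Let $x(t)=x^{(N)}(t)$ be the Markov process with generator $L=L_0+L_s$ defined in the context, with initial condition $x(0)$ satisfying $\mathsf E|M(x(0))|<\infty$, and let $\mu_N(t):=\mathsf E\,M(x(t))$. Then for every fixed $t>0$, $\lim_{N\to\infty}\frac{\mu_N(t)-\mu_N(0)}{t}=\alpha a$. Moreover, for every function $t(N)\to\infty$, $\frac{\mu_N(t(N))-\mu_N(0)}{t(N)}\to\alpha a$ as $N\to\infty$.
   Context: Fix an integer $k\ge2$ and integers $k_1,\dots,k_l\ge2$ with $k_1+\dots+k_l=k$ (fixed independently of $N$). For $N\ge k$, let $\mathcal I$ be the set of ordered $k$-tuples $(i_1,\dots,i_k)$ of pairwise distinct elements of $\{1,\dots,N\}$. For $(i_1,\dots,i_k)\in\mathcal I$ split it into consecutive blocks $\Gamma_1,\dots,\Gamma_l$ of lengths $k_1,\dots,k_l$ and let $g_j$ be the first element of $\Gamma_j$. The synchronization map $J^{(i_1,\dots,i_k)}:\mathbb{R}^N\to\mathbb{R}^N$, $x\mapsto y$, is $y_m=x_m$ if $m\notin\{i_1,\dots,i_k\}$ and $y_m=x_{g_j}$ if $m\in\Gamma_j$. Let $\alpha>0,\delta>0$ (independent of $N$), and let $\rho$ be a probability measure on $\mathbb{R}$ with compact support, $b_2:=\int z^2\rho(dz)>0$, $a:=\int z\rho(dz)$. The process $x(t)=(x_1(t),\dots,x_N(t))\in\mathbb{R}^N$ is the continuous-time Markov jump process with generator $L=L_0+L_s$, $(L_0f)(x)=\alpha\sum_{i=1}^N\int\big(f(x+ze_i)-f(x)\big)\rho(dz)$,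 $(L_sf)(x)=\frac{\delta}{N(N-1)\cdots(N-k+1)}\sum_{(i_1,\dots,i_k)\in\mathcal I}\big(f(J^{(i_1,\dots,i_k)}x)-f(x)\big)$: each particle independently jumps $x_i\to x_i+z$, $z\sim\rho$, at rate $\alpha$, and independently at rate $\delta$ a uniformly random tuple of $\mathcal I$ is chosen and the configuration is replaced by $J^{(i_1,\dots,i_k)}x$. $M(x)=\frac1N\sum_{m=1}^N x_m$. *)

(* Defs.v *)
From HB Require Import structures.
From mathcomp Require Import all_boot all_order all_algebra.
From mathcomp Require Import all_classical all_reals all_analysis.
Set Implicit Arguments. Unset Strict Implicit. Unset Printing Implicit Defensive.
Import Order.TTheory GRing.Theory Num.Theory.
Local Open Scope ring_scope.

Section SyncModel.
Variables (R : realType) (ks : seq nat) (N : nat).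
Variables (alpha delta : R) (rho : probability R R).

Definition config := 'I_N -> R.

Definition ktot := sumn ks.

Definition Mmean (x : config) : R := (\sum_(m < N) x m) / N%:R.

Definition shift (i : 'I_N) (z : R) (x : config) : config :=
  fun j => if j == i then x j + z else x j.

(* start position (0-based) of the block containing position p of a tuple:
   the largest partial sum k_1+...+k_j (j = 0..l) which is <= p *)
Definition bstart (p : nat) : nat :=
  (\max_(s <- 0 :: scanl addn 0 ks | s <= p) s)%N.

Definition sync (t : ktot.-tuple 'I_N) (x : config) : config :=
  fun m => if m \in val t then x (nth m (val t) (bstart (index m (val t))))
           else x m.

Definition gen (f : config -> R) (x : config) : R :=
  alpha * \sum_(i < N) Rintegral rho setT (fun z => f (shift i z x) - f x)
  + delta / (N ^_ ktot)%:R *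
    \sum_(t : ktot.-tuple 'I_N | uniq t) (f (sync t x) - f x).

(* total jump rate and the jump (uniformized) Markov kernel K = I + L/Lambda *)
Definition Lambda : R := N%:R * alpha + delta.
Definition Kop (f : config -> R) (x : config) : R := f x + gen f x / Lambda.

(* transition semigroup by uniformization:
   (P_t f)(x) = sum_n e^{-Lambda t} (Lambda t)^n / n! (K^n f)(x) = E_x f(x(t)) *)
Definition Pt (t : R) (f : config -> R) (x : config) : R :=
  limn (fun m => \sum_(n < m)
          expR (- (Lambda * t)) * (Lambda * t) ^+ n / (n`!)%:R * iter n Kop f x).

End SyncModel.

(* mu_N(t) = E M(x(t)) = E [ (P_t M)(x(0)) ] for random initial condition X0 *)
Definition mu (R : realType) (ks : seq nat) (alpha delta : R)
  (rho : probability R R) (d : measure_display) (Omega : measurableType d)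
  (P : probability Omega R) (N : nat) (X0 : Omega -> config R N) (t : R) : R :=
  Rintegral P setT
    (fun w => Pt ks alpha delta rho t (@Mmean R N) (X0 w)).

(* Main.v *)
Require Import Defs.
From HB Require Import structures.
From mathcomp Require Import all_boot all_order all_algebra.
From mathcomp Require Import all_classical all_reals all_analysis.
From mathcomp Require Import perm ring.
Import Order.TTheory GRing.Theory Num.Theory numFieldNormedType.Exports.
Local Open Scope ring_scope.
Local Open Scope classical_set_scope.

Section A.
Variable R : realType.

Definition swapt (N k : nat) (p q : 'I_k) (t : k.-tuple 'I_N) : k.-tuple 'I_N :=
  [tuple tnth t (tperm p q j) | j < k].

Lemma swaptK N k p q : involutive (@swapt N k p q).
Proof.
move=> t; apply: eq_from_tnth => j; rewrite /swapt !tnth_mktuple.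
by rewrite tpermK.
Qed.

Lemma swapt_uniq N k p q (t : k.-tuple 'I_N) : uniq t -> uniq (@swapt N k p q t).
Proof.
move=> /tuple_uniqP ht; apply/tuple_uniqP => i j.
rewrite /swapt !tnth_mktuple => /ht /perm_inj; done.
Qed.

Lemma sum_tnth_swap (N k : nat) (F : 'I_N -> R) (p q : 'I_k) :
  \sum_(t : k.-tuple 'I_N | uniq t) F (tnth t p) =
  \sum_(t : k.-tuple 'I_N | uniq t) F (tnth t q).
Proof.
rewrite (reindex_inj (inv_inj (@swaptK N k p q))) /=.
apply: eq_big => t.
  apply/idP/idP.
    by move=> h; have := @swapt_uniq N k p q (swapt N k p q t) h; rewrite swaptK.
  exact: (@swapt_uniq N k p q t).
by move=> _; rewrite /swapt tnth_mktuple tpermL.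
Qed.

Lemma bstart_le ks p : (bstart ks p <= p)%N.
Proof.
rewrite /bstart; elim/big_ind: _ => //.
by move=> u v hu hv; rewrite geq_max hu hv.
Qed.

Definition bsO ks (p : 'I_(ktot ks)) : 'I_(ktot ks) :=
  Ordinal (leq_ltn_trans (bstart_le ks p) (ltn_ord p)).

Lemma sync_sum ks N (t : (ktot ks).-tuple 'I_N) (x : config R N) : uniq t ->
  \sum_(m < N) (sync t x m - x m) =
  \sum_(p < ktot ks) (x (tnth t (bsO ks p)) - x (tnth t p)).
Proof.
move=> ut.
rewrite (bigID (fun m => m \in val t)) /= [X in _ + X]big1; last first.
  by move=> m /negbTE hm; rewrite /sync hm subrr.
rewrite addr0 -big_uniq //=.

rewrite big_tuple; apply: eq_bigr => p _.
rewrite /sync mem_tnth; congr (x _ - _).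
rewrite (tnth_nth (tnth t p)) index_uniq ?size_tuple //.
rewrite [RHS](tnth_nth (tnth t p)) /=; apply: set_nth_default.
by rewrite size_tuple; exact: (ltn_ord (bsO ks p)).
Qed.

Lemma Ls_M ks N (x : config R N) :
  \sum_(t : (ktot ks).-tuple 'I_N | uniq t) (Mmean (sync t x) - Mmean x) = 0.
Proof.
transitivity (\sum_(t : (ktot ks).-tuple 'I_N | uniq t)
   (\sum_(p < ktot ks) (x (tnth t (bsO ks p)) - x (tnth t p))) / N%:R).
  apply: eq_bigr => t ut.
  by rewrite /Mmean -mulrBl -sumrB sync_sum.
rewrite -mulr_suml exchange_big /= big1 ?mul0r // => p _.
by rewrite sumrB (@sum_tnth_swap N (ktot ks) x (bsO ks p) p) subrr.
Qed.

Variables (ks : seq nat) (alpha delta : R) (rho : probability R R).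

Lemma gen_const N (f : config R N -> R) c x :
  gen ks alpha delta rho (fun y => f y + c) x = gen ks alpha delta rho f x.
Proof.
rewrite /gen; congr (_ * _ + _ * _).
  apply: eq_bigr => i _; congr (Rintegral _ _ _); apply/funext => z.
  by rewrite opprD addrACA subrr addr0.
apply: eq_bigr => t _; by rewrite opprD addrACA subrr addr0.
Qed.

Lemma gen_M N (hN : (0 < N)%N)
  (hint : rho.-integrable setT (EFin \o (fun z : R => z))) x :
  gen ks alpha delta rho (@Mmean R N) x = alpha * Rintegral rho setT (fun z => z).
Proof.
rewrite /gen Ls_M mulr0 addr0; congr (_ * _).
have hN' : N%:R != 0 :> R by rewrite pnatr_eq0 -lt0n.
transitivity (\sum_(i < N) (Rintegral rho setT (fun z => z) / N%:R)).
  apply: eq_bigr => i _.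
  rewrite -RintegralZr //; congr (Rintegral _ _ _); apply/funext => z.
  rewrite /Mmean -mulrBl; congr (_ * _).
  rewrite /Defs.shift (bigD1 i) //= [X in _ - X](bigD1 i) //= eqxx.
  rewrite (eq_bigr (fun j => x j)); last by move=> j /negbTE ->.
  ring.
set c := Rintegral rho setT (fun z => z).
have -> : \sum_(i < N) (c / N%:R) = (c / N%:R) *+ N by rewrite sumr_const card_ord.
by rewrite -mulr_natr divfK.
Qed.

Lemma iter_K N (hN : (0 < N)%N)
  (hint : rho.-integrable setT (EFin \o (fun z : R => z))) n :
  iter n (Kop ks alpha delta rho) (@Mmean R N) =
  (fun y => Mmean y + n%:R * (alpha * Rintegral rho setT (fun z => z) / Lambda N alpha delta)).
Proof.
elim: n => [|n IH]; first by apply/funext => y /=; rewrite mul0r addr0.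
rewrite iterS IH; apply/funext => y.
rewrite /Kop gen_const gen_M // -addn1 natrD; ring.
Qed.

Lemma exp_coeffS (y : R) k :
  (k.+1)%:R * exp_coeff y k.+1 = y * exp_coeff y k.
Proof.
rewrite !exp_coeffE /= factS natrM exprS.
have h1 : (k`!)%:R != 0 :> R by rewrite pnatr_eq0 -lt0n fact_gt0.
have h2 : (k.+1)%:R != 0 :> R by rewrite pnatr_eq0.
field; rewrite h1 /= -(natrD _ 1 k) add1n; exact: h2.
Qed.

Lemma series_exp_cvg (y : R) : series (exp_coeff y) n @[n --> \oo] --> expR y.
Proof. exact: is_cvg_series_exp_coeff. Qed.

Lemma Pt_M N (hN : (0 < N)%N) (hL : Lambda N alpha delta != 0)
  (hint : rho.-integrable setT (EFin \o (fun z : R => z))) (t : R) x :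
  Pt ks alpha delta rho t (@Mmean R N) x =
  Mmean x + alpha * Rintegral rho setT (fun z => z) * t.
Proof.
set a := Rintegral rho setT (fun z => z).
set L := Lambda N alpha delta.
set y := L * t.
set c := alpha * a / L.
set E := expR (- y).
rewrite /Pt -/L -/y -/E.
set u := fun m => _.
have hu : forall m, u m.+1 = E * Mmean x * series (exp_coeff y) m.+1 + E * c * y * series (exp_coeff y) m.
  move=> m; rewrite /u.
  under eq_bigr => n _ do rewrite iter_K //.
  have hs : forall k, series (exp_coeff y) k = \sum_(i < k) exp_coeff y i.
    by move=> k; rewrite /series /= big_mkord.
  rewrite !hs.
  transitivity (\sum_(n < m.+1) (E * Mmean x * exp_coeff y n + E * c * (n%:R * exp_coeff y n))).
    apply: eq_bigr => n _; rewrite exp_coeffE /c /= -/a -/L; ring.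
  rewrite big_split /= -!mulr_sumr; congr (_ + _).
  rewrite big_ord_recl /= mul0r add0r.
  under eq_bigr => i _ do rewrite /bump /= add1n exp_coeffS.
  by rewrite -mulr_sumr mulrA.
have hcv : u n @[n --> \oo] --> E * Mmean x * expR y + E * c * y * expR y.
  rewrite -cvg_shiftS.
  have -> : [sequence u n.+1]_n = (fun m => E * Mmean x * series (exp_coeff y) m.+1
       + E * c * y * series (exp_coeff y) m) by apply/funext => m; exact: hu.
  apply: cvgD; apply: cvgMr.
    by have := series_exp_cvg y; rewrite -cvg_shiftS.
  exact: series_exp_cvg.
rewrite (cvg_lim _ hcv) //.
rewrite /E expRN /c /y; field.
by rewrite hL /=; apply/lt0r_neq0; exact: expR_gt0.
Qed.

Lemma int_id (C : R) (hC : rho [set z | C < `|z|] = 0%E) :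
  rho.-integrable setT (EFin \o (fun z : R => z)).
Proof.
have mN : measurable [set z : R | C < `|z|].
  have := @measurable_realfun.normr_measurable R setT measurableT `]C, +oo[%classic (measurable_itv _).
  rewrite setTI; congr measurable; apply/seteqP; split => z /=;
    by rewrite in_itv /= andbT.
rewrite (negligible_integrable mN measurableT _ hC); last first.
  by apply/measurable_realfun.measurable_EFinP; exact: measurable_id.
apply: measurable_bounded_integrable.
- exact: measurableD.
- apply: (le_lt_trans (probability_le1 rho (measurableD measurableT mN))).
  exact: ltey.
- exact: measurable_id.
- exists C; split; first exact: num_real.
  move=> M hM x [_ hx] /=.
  apply: (le_trans _ (ltW hM)); rewrite leNgt; exact/negP.
Qed.
End A.

Theorem theorem1 (R : realType) (ks : seq nat)
  (hks : all (fun kj => 2 <= kj)%N ks) (hl : ks != [::])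
  (alpha delta : R) (halpha : 0 < alpha) (hdelta : 0 < delta)
  (rho : probability R R)
  (hsupp : exists C : R, rho [set z | C < `|z|] = 0%E)
  (hb2 : 0 < Rintegral rho setT (fun z => z ^+ 2))
  (d : measure_display) (Omega : measurableType d) (P : probability Omega R)
  (X0 : forall N : nat, Omega -> config R N)
  (hX0meas : forall (N : nat) (i : 'I_N), measurable_fun setT (fun w => X0 N w i))
  (hX0int : forall N : nat,
      P.-integrable setT (fun w => (Mmean (X0 N w))%:E)) :
  let a := Rintegral rho setT (fun z => z) in
  let muN := fun (N : nat) (t : R) => mu ks alpha delta rho P (X0 N) t in
  (forall t : R, 0 < t ->
     (fun N : nat => (muN N t - muN N 0) / t) @ \oo --> (alpha * a))
  /\
  (forall tN : nat -> R, tN @ \oo --> +oo ->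
     (fun N : nat => (muN N (tN N) - muN N 0) / tN N) @ \oo --> (alpha * a)).
Proof.
move=> a muN.
have hL : forall N : nat, Lambda N alpha delta != 0.
  move=> N; apply: lt0r_neq0; apply: ltr_wpDl hdelta.
  by apply: mulr_ge0 => //; exact: ltW.
have [C hC] := hsupp.
have hint := @int_id _ rho C hC.
have key : forall N : nat, (0 < N)%N -> forall t : R,
    muN N t = Rintegral P setT (fun w => Mmean (X0 N w)) + alpha * a * t.
  move=> N hN t; rewrite /muN /mu.
  transitivity (Rintegral P setT (fun w => Mmean (X0 N w) + alpha * a * t)).
    by congr (Rintegral _ _ _); apply/funext => w; rewrite Pt_M.

  rewrite RintegralD //; [|exact: hX0int|exact: finite_measure_integrable_cst].
  have hP : P [set: Omega] = 1%E := probability_setT P.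
  rewrite Rintegral_cst //; congr (_ + _); rewrite -[RHS]mulr1; congr (_ * _).
  exact: (f_equal fine hP).
split.
  move=> t ht; apply: cvg_near_cst.
  exists 1%N => // N /= hN.
  rewrite !key //; field; exact: lt0r_neq0.
move=> tN htN; apply: cvg_near_cst.
have h1 : \forall N \near \oo, 0 < tN N := cvgry_gt htN 0.
near=> N.
have hN : (0 < N)%N by near: N; exists 1%N.
have ht : 0 < tN N by near: N; exact: h1.
rewrite !key //; field; exact: lt0r_neq0.
Unshelve. all: end_near.
Qed.
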